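(* Let $n\ge3$ and let $p$ be a permutation pattern whose longest decreasing subsequence has length at least $4$. Then the coefficient sequence $(a_i)$ of $F_{p,n}(x)$ is unbounded.
   Context: An affine permutation of size $n$ is a bijection $w:\mathbb{Z}\to\mathbb{Z}$ with $w(i+n)=w(i)+n$ for all $i$ and $w(1)+\cdots+w(n)=\binom{n+1}{2}$; $\widetilde{S}_n$ is the group of these, generated by $s_0,\dots,s_{n-1}$ where $ws_i$ swaps the values at positions $i+mn$ and $i+1+mn$ for all $m\in\mathbb{Z}$; $\ell(w)$ is the minimal number of generators in a factorization. For $p\in S_k$, $w$ contains $p$ if there exist integers $i_1<\cdots<i_k$ with $w(i_1),\dots,w(i_k)$ in the same relative order as $p_1,\dots,p_k$; otherwise $w$ avoids $p$. $F_{p,n}(x)=\sum_{w\in\widetilde{S}_n,\,w\text{ avoids }p}x^{\ell(w)}=\sum_i a_ix^i$. *)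

(* Defs.v *)
From HB Require Import structures.
From mathcomp Require Import all_boot all_order all_algebra all_fingroup.
Set Implicit Arguments. Unset Strict Implicit. Unset Printing Implicit Defensive.
Import Order.TTheory GRing.Theory Num.Theory.
Local Open Scope ring_scope.

Definition is_affine_perm (n : nat) (w : int -> int) : Prop :=
  (exists g : int -> int, cancel w g /\ cancel g w) /\
  (forall i : int, w (i + n%:Z) = w i + n%:Z) /\
  \sum_(1 <= i < n.+1) w i%:Z = ('C(n.+1, 2))%:Z.

Definition s_gen (n i : nat) (j : int) : int :=
  if ((j - i%:Z) %% n%:Z)%Z == 0 then j + 1
  else if ((j - i%:Z - 1) %% n%:Z)%Z == 0 then j - 1
  else j.

Definition word_eval (n : nat) (word : seq 'I_n) : int -> int :=
  foldr (fun (i : 'I_n) f => fun j => s_gen n (nat_of_ord i) (f j)) id word.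

Definition has_length (n : nat) (w : int -> int) (l : nat) : Prop :=
  (exists word : seq 'I_n, size word = l /\ forall j, word_eval word j = w j) /\
  (forall word : seq 'I_n, (forall j, word_eval word j = w j) -> (l <= size word)%N).

Definition contains (k : nat) (w : int -> int) (p : 'S_k) : Prop :=
  exists f : 'I_k -> int,
    (forall a b : 'I_k, (a < b)%N -> f a < f b) /\
    (forall a b : 'I_k, (w (f a) < w (f b)) = (p a < p b)%N).

Definition avoids (k : nat) (w : int -> int) (p : 'S_k) : Prop := ~ contains w p.

Definition lds_ge4 (k : nat) (p : 'S_k) : Prop :=
  exists a b c d : 'I_k,
    [/\ (a < b)%N, (b < c)%N, (c < d)%N &
        [/\ (p b < p a)%N, (p c < p b)%N & (p d < p c)%N]].

(* Main.v *)
Require Import Defs.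
From HB Require Import structures.
From mathcomp Require Import all_boot all_order all_algebra all_fingroup.
From mathcomp Require Import zify ring.
Import Order.TTheory GRing.Theory Num.Theory.
Local Open Scope ring_scope.

Lemma modk (n : nat) (k y : int) : (0 < n)%N -> k * n%:Z <= y -> y < k * n%:Z + n%:Z ->
  (y %% n%:Z)%Z = y - k * n%:Z.
Proof.
move=> n0 h1 h2.
have e : (y %/ n%:Z)%Z = k.
  have -> : y = k * n%:Z + (y - k * n%:Z) by lia.
  rewrite divzMDl; last by rewrite eqz_nat -lt0n.
  rewrite divz_small; first by rewrite addr0.
  apply/andP; split; lia.
by rewrite /modz e.
Qed.

Lemma divk (n : nat) (k y : int) : (0 < n)%N -> k * n%:Z <= y -> y < k * n%:Z + n%:Z ->
  (y %/ n%:Z)%Z = k.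
Proof.
move=> n0 h1 h2.
have -> : y = k * n%:Z + (y - k * n%:Z) by lia.
rewrite divzMDl; last by rewrite eqz_nat -lt0n.
rewrite divz_small; first by rewrite addr0.
apply/andP; split; lia.
Qed.

Lemma decz (n : nat) (x : int) : (0 < n)%N ->
  x = (x %/ n%:Z)%Z * n%:Z + (x %% n%:Z)%Z /\ 0 <= (x %% n%:Z)%Z < n%:Z.
Proof.
move=> n0; split; first exact: divz_eq.
have nz : n%:Z != 0 by rewrite eqz_nat -lt0n.
apply/andP; split; first exact: modz_ge0.
by apply: ltz_pmod; lia.
Qed.

Definition i1 (n i : nat) : int := if i.+1 == n then 0 else i.+1%:Z.

Lemma sgen_eq (n i : nat) (x q r : int) : (2 < n)%N -> (i < n)%N ->
  x = q * n%:Z + r -> 0 <= r -> r < n%:Z ->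
  s_gen n i x = if r == i%:Z then x + 1 else if r == i1 n i then x - 1 else x.
Proof.
move=> n2 ilt hx r0 rn.
have n0 : (0 < n)%N by lia.
rewrite /s_gen /i1.
have -> : ((x - i%:Z) %% n%:Z == 0)%Z = (r == i%:Z).
  case: (lerP i%:Z r) => h.
    rewrite (@modk n q) //; lia.
  rewrite (@modk n (q - 1)) //; lia.
have -> : ((x - i%:Z - 1) %% n%:Z == 0)%Z = (r == if i.+1 == n then 0 else i.+1%:Z).
  case: (lerP (i.+1)%:Z r) => h.
    rewrite (@modk n q (x - i%:Z - 1)) //; case: (i.+1 == n) /eqP => hh; lia.
  rewrite (@modk n (q - 1) (x - i%:Z - 1)) //; case: (i.+1 == n) /eqP => hh; lia.
by [].
Qed.

Lemma floor_small (n : nat) (y : int) : (0 < n)%N -> - (2 * n%:Z) <= y -> y < 2 * n%:Z ->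
  (y %/ n%:Z)%Z = if y < - n%:Z then -2 else if y < 0 then -1 else if y < n%:Z then 0 else 1.
Proof.
move=> n0 h1 h2.
case: ifP => c1; first by apply: divk => //; lia.
case: ifP => c2; first by apply: divk => //; lia.
case: ifP => c3; first by apply: divk => //; lia.
by apply: divk => //; lia.
Qed.

Lemma FL (n : nat) (y e : int) : (2 < n)%N -> - n%:Z < y -> y < n%:Z -> -2 <= e -> e <= 2 ->
  ((((y + e) %/ n%:Z)%Z - (y %/ n%:Z)%Z <= 1) /\ ((y %/ n%:Z)%Z - ((y + e) %/ n%:Z)%Z <= 1)) /\
  (e = 0 -> ((y + e) %/ n%:Z)%Z = (y %/ n%:Z)%Z) /\
  (e = 1 -> y != -1 -> y != n%:Z - 1 -> ((y + e) %/ n%:Z)%Z = (y %/ n%:Z)%Z) /\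
  (e = -1 -> y != 0 -> ((y + e) %/ n%:Z)%Z = (y %/ n%:Z)%Z).
Proof.
move=> n2 h1 h2 h3 h4.
have n0 : (0 < n)%N by lia.
rewrite (@floor_small n y) //; try lia.
rewrite (@floor_small n (y + e)) //; try lia.
do ! (case: ifP => ?); lia.
Qed.

Definition dl (n i : nat) (r : int) : int :=
  if r == i%:Z then 1 else if r == i1 n i then -1 else 0.

Lemma sgen_dl (n i : nat) (x : int) : (2 < n)%N -> (i < n)%N ->
  s_gen n i x = x + dl n i (x %% n%:Z)%Z.
Proof.
move=> n2 ilt.
have n0 : (0 < n)%N by lia.
have [hx /andP [h1 h2]] := @decz n x n0.
rewrite (@sgen_eq n i x _ _ n2 ilt hx h1 h2) /dl.
case: ifP => _; first by [].
case: ifP => _; lia.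
Qed.

Lemma i1_spec (n i : nat) : (i.+1 = n /\ i1 n i = 0) \/ ((i.+1 < n)%N /\ i1 n i = i.+1%:Z) \/ (n <= i)%N.
Proof. rewrite /i1; case: eqP => h; lia. Qed.

Definition special (n i : nat) (ra rb : int) : bool :=
  ((ra == i%:Z) && (rb == i1 n i)) || ((ra == i1 n i) && (rb == i%:Z)).

Lemma term_change (n i : nat) (xa xb : int) : (2 < n)%N -> (i < n)%N ->
  let d := ((xb - xa) %/ n%:Z)%Z in
  let d' := ((s_gen n i xb - s_gen n i xa) %/ n%:Z)%Z in
  `|d'| <= `|d| + 1 /\ (d' != d -> special n i (xa %% n%:Z)%Z (xb %% n%:Z)%Z).
Proof.
move=> n2 ilt /=.
have n0 : (0 < n)%N by lia.
have nz : n%:Z != 0 by rewrite eqz_nat -lt0n.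
rewrite !sgen_dl //.
have [ha /andP [ha1 ha2]] := @decz n xa n0.
have [hb /andP [hb1 hb2]] := @decz n xb n0.
move: ha1 ha2 hb1 hb2.
set qa := (xa %/ n%:Z)%Z; set ra := (xa %% n%:Z)%Z.
set qb := (xb %/ n%:Z)%Z; set rb := (xb %% n%:Z)%Z.
move: ha hb => -> -> ha1 ha2 hb1 hb2.
have -> : qb * n%:Z + rb - (qa * n%:Z + ra) = (qb - qa) * n%:Z + (rb - ra) by ring.
have -> : qb * n%:Z + rb + dl n i rb - (qa * n%:Z + ra + dl n i ra)
   = (qb - qa) * n%:Z + (rb - ra + dl n i rb - dl n i ra) by ring.
rewrite !divzMDl //.
have dls : forall r, (dl n i r = 1 /\ r = i%:Z) \/
    (dl n i r = -1 /\ r = i1 n i /\ r != i%:Z) \/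
    (dl n i r = 0 /\ r != i%:Z /\ r != i1 n i).
  move=> r; rewrite /dl; case: ifP => /eqP h1; first by left.
  case: ifP => /eqP h2; right; [left|right]; split => //; apply/eqP => //.
have Ha := dls ra; have Hb := dls rb.
move: Ha Hb; rewrite /special.
move: (dl n i ra) (dl n i rb) (i1 n i) (i1_spec n i) => da db j1 Hj Ha Hb.
have -> : rb - ra + db - da = (rb - ra) + (db - da) by ring.
have := @FL n (rb - ra) (db - da) n2.
move: ((rb - ra) %/ n%:Z)%Z ((rb - ra + (db - da)) %/ n%:Z)%Z => f0 f1 HF.
case: Hj => [[Hj1 Hj2]|[[Hj1 Hj2]|Hj]]; last by lia.
all: case: Ha => [[Ha1 Ha2]|[[Ha1 [Ha2 Ha3]]|[Ha1 [Ha2 Ha3]]]];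
  case: Hb => [[Hb1 Hb2]|[[Hb1 [Hb2 Hb3]]|[Hb1 [Hb2 Hb3]]]]; subst da db j1.
all: lia.
Qed.

Lemma sum_same (m k : nat) (u u' : nat -> int) :
  (forall b, (m <= b < k)%N -> u' b = u b) ->
  \sum_(m <= b < k) u' b = \sum_(m <= b < k) u b.
Proof. by move=> h; apply: eq_big_nat. Qed.

Lemma sum_change1 (m k : nat) (u u' : nat -> int) :
  (forall b b', (m <= b < k)%N -> (m <= b' < k)%N -> u' b != u b -> u' b' != u b' -> b = b') ->
  (forall b, (m <= b < k)%N -> u' b <= u b + 1) ->
  \sum_(m <= b < k) u' b <= \sum_(m <= b < k) u b + 1.
Proof.
elim: k => [|k IH] huniq hle.
  by rewrite !big_geq.
case: (leqP m k) => hmk; last first.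
  by rewrite !big_geq //; lia.
rewrite !big_nat_recr //=.
case: (eqVneq (u' k) (u k)) => hk.
  rewrite hk.
  have h1 : forall b b', (m <= b < k)%N -> (m <= b' < k)%N -> u' b != u b -> u' b' != u b' -> b = b'.
    move=> b b' hb hb'; apply: huniq; lia.
  have h2 : forall b, (m <= b < k)%N -> u' b <= u b + 1.
    move=> b hb; apply: hle; lia.
  by rewrite -addrA [u k + 1]addrC addrA lerD2r; apply: IH.
rewrite (@sum_same m k u u').
  by rewrite -addrA lerD2l; apply: hle; lia.
move=> b hb; apply/eqP; apply: contraT => hb'.
have := huniq b k; lia.
Qed.

Definition Psi (n : nat) (F : int -> int) : int :=
  \sum_(2 <= b < n.+1) `|((F b%:Z - F 1) %/ n%:Z)%Z|
  + \sum_(2 <= a < n) `|((F n%:Z - F a%:Z) %/ n%:Z)%Z|.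

Definition injw (n : nat) (F : int -> int) : Prop :=
  forall a b : nat, (1 <= a <= n)%N -> (1 <= b <= n)%N -> a != b ->
    (F a%:Z %% n%:Z)%Z != (F b%:Z %% n%:Z)%Z.

Lemma i_ne_i1 (n i : nat) : (2 < n)%N -> (i < n)%N -> i%:Z != i1 n i.
Proof. move=> n2 ilt; have := i1_spec n i; move: (i1 n i) => j; lia. Qed.

Lemma special_uniq (n i : nat) (r1 ra rb : int) : (2 < n)%N -> (i < n)%N ->
  special n i r1 ra -> special n i r1 rb -> ra = rb.
Proof.
move=> n2 ilt; have := @i_ne_i1 n i n2 ilt; rewrite /special.
move: (i1 n i) => j hj.
case/orP => /andP [/eqP e1 /eqP e2]; case/orP => /andP [/eqP e3 /eqP e4]; lia.
Qed.

Lemma special_three (n i : nat) (r ra rb : int) :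
  special n i ra rb -> (r == i%:Z) || (r == i1 n i) -> r != ra -> r != rb -> False.
Proof.
rewrite /special; move: (i1 n i) => j.
case/orP => /andP [/eqP e1 /eqP e2]; case/orP => /eqP e3; lia.
Qed.

Lemma special_sym (n i : nat) (ra rb : int) : special n i ra rb = special n i rb ra.
Proof. by rewrite /special orbC [(rb == _) && _]andbC [(rb == i1 n i) && _]andbC. Qed.

Lemma special_sp (n i : nat) (ra rb : int) :
  special n i ra rb -> (ra == i%:Z) || (ra == i1 n i).
Proof. by rewrite /special; case/orP => /andP [-> _]; rewrite ?orbT. Qed.

Lemma r1 (a n : nat) : (2 <= a < n)%N -> (1 <= a <= n)%N. Proof. lia. Qed.
Lemma r2 (a n : nat) : (2 <= a < n.+1)%N -> (1 <= a <= n)%N. Proof. lia. Qed.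
Lemma r_one (n : nat) : (2 < n)%N -> (1 <= 1 <= n)%N. Proof. lia. Qed.
Lemma r_nn (n : nat) : (2 < n)%N -> (1 <= n <= n)%N. Proof. lia. Qed.
Lemma ne1 (a : nat) : (2 <= a)%N -> (1%N != a). Proof. lia. Qed.
Lemma ne_an (a n : nat) : (a < n)%N -> (a != n). Proof. lia. Qed.

Lemma psi_step (n i : nat) (F : int -> int) : (2 < n)%N -> (i < n)%N -> injw n F ->
  Psi n (fun j => s_gen n i (F j)) <= Psi n F + 1.
Proof.
move=> n2 ilt hinj.
rewrite /Psi.
set R := fun x : nat => (F x%:Z %% n%:Z)%Z.
have ij := i1_spec n i.
have TC := fun xa xb => @term_change n i xa xb n2 ilt.
have TC1 := fun b : nat => TC (F 1) (F b%:Z).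
have TC2 := fun a : nat => TC (F a%:Z) (F n%:Z).
case: (boolP ((R 1%N == i%:Z) || (R 1%N == i1 n i))) => h1.
-
  have e2 : \sum_(2 <= a < n) `|((s_gen n i (F n%:Z) - s_gen n i (F a%:Z)) %/ n%:Z)%Z|
         = \sum_(2 <= a < n) `|((F n%:Z - F a%:Z) %/ n%:Z)%Z|.
    apply: sum_same => a ha.
    have [_ T] := TC2 a.
    case: (eqVneq ((s_gen n i (F n%:Z) - s_gen n i (F a%:Z)) %/ n%:Z)%Z
                  ((F n%:Z - F a%:Z) %/ n%:Z)%Z) => hc; first by rewrite hc.
    have /andP [ha1 ha2] := ha.
    have d1 := hinj 1%N a (@r_one n n2) (@r1 a n ha) (@ne1 a ha1).
    have d2 := hinj 1%N n (@r_one n n2) (@r_nn n n2) (@ne1 n (ltnW n2)).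
    have sp := T hc.
    exfalso; exact: (@special_three n i _ _ _ sp h1 d1 d2).
  rewrite e2.
  suff : \sum_(2 <= b < n.+1) `|((s_gen n i (F b%:Z) - s_gen n i (F 1)) %/ n%:Z)%Z|
         <= \sum_(2 <= b < n.+1) `|((F b%:Z - F 1) %/ n%:Z)%Z| + 1 by move=> H; rewrite addrAC lerD2r.
  apply: sum_change1.
    move=> b b' hb hb' c1 c2.
    have RR := fun a => @r2 a n.
    have [_ T1] := TC1 b; have [_ T2] := TC1 b'.
    have s1 : special n i (F 1 %% n%:Z)%Z (F b%:Z %% n%:Z)%Z.
      by apply: T1; apply: contra c1 => /eqP ->.
    have s2 : special n i (F 1 %% n%:Z)%Z (F b'%:Z %% n%:Z)%Z.
      by apply: T2; apply: contra c2 => /eqP ->.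
    apply/eqP; apply: contraT => hbb.
    have := hinj b b' (RR b hb) (RR b' hb') hbb.
    by rewrite (@special_uniq n i _ _ _ n2 ilt s1 s2) eqxx.
  by move=> b hb; have [T _] := TC1 b.
- have e1 : \sum_(2 <= b < n.+1) `|((s_gen n i (F b%:Z) - s_gen n i (F 1)) %/ n%:Z)%Z|
         = \sum_(2 <= b < n.+1) `|((F b%:Z - F 1) %/ n%:Z)%Z|.
    apply: sum_same => b hb.
    have [_ T] := TC1 b.
    case: (eqVneq ((s_gen n i (F b%:Z) - s_gen n i (F 1)) %/ n%:Z)%Z
                  ((F b%:Z - F 1) %/ n%:Z)%Z) => hc; first by rewrite hc.
    by move: h1; rewrite (@special_sp n i _ _ (T hc)).
  rewrite e1.
  suff : \sum_(2 <= a < n) `|((s_gen n i (F n%:Z) - s_gen n i (F a%:Z)) %/ n%:Z)%Z|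
         <= \sum_(2 <= a < n) `|((F n%:Z - F a%:Z) %/ n%:Z)%Z| + 1 by move=> H; rewrite -addrA lerD2l.
  apply: sum_change1.
    move=> b b' hb hb' c1 c2.
    have RR := fun a => @r1 a n.
    have [_ T1] := TC2 b; have [_ T2] := TC2 b'.
    have s1 : special n i (F b%:Z %% n%:Z)%Z (F n%:Z %% n%:Z)%Z.
      by apply: T1; apply: contra c1 => /eqP ->.
    have s2 : special n i (F b'%:Z %% n%:Z)%Z (F n%:Z %% n%:Z)%Z.
      by apply: T2; apply: contra c2 => /eqP ->.
    apply/eqP; apply: contraT => hbb.
    have := hinj b b' (RR b hb) (RR b' hb') hbb.
    rewrite special_sym in s1; rewrite special_sym in s2.
    by rewrite (@special_uniq n i _ _ _ n2 ilt s1 s2) eqxx.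
  by move=> b hb; have [T _] := TC2 b.
Qed.

Lemma sres (n i : nat) (x : int) : (2 < n)%N -> (i < n)%N ->
  (s_gen n i x %% n%:Z)%Z =
   let r := (x %% n%:Z)%Z in if r == i%:Z then i1 n i else if r == i1 n i then i%:Z else r.
Proof.
move=> n2 ilt /=.
have n0 : (0 < n)%N by lia.
have [hx /andP [h1 h2]] := @decz n x n0.
rewrite (@sgen_eq n i x _ _ n2 ilt hx h1 h2).
move: hx h1 h2; set q := (x %/ n%:Z)%Z; set r := (x %% n%:Z)%Z => hx h1 h2.
have ij := i1_spec n i.
case: ifP => /eqP e1.
  case: (ltrP (r + 1) n%:Z) => h.
    rewrite (@modk n q) //; lia.
  rewrite (@modk n (q + 1)) //; lia.
case: ifP => /eqP e2.
  case: (ltrP 0 r) => h.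
    rewrite (@modk n q) //; lia.
  rewrite (@modk n (q - 1)) //; lia.
rewrite (@modk n q) //; lia.
Qed.

Lemma injw_step (n i : nat) (F : int -> int) : (2 < n)%N -> (i < n)%N -> injw n F ->
  injw n (fun j => s_gen n i (F j)).
Proof.
move=> n2 ilt hinj a b ha hb hab.
rewrite !sres //=.
have := hinj a b ha hb hab.
have ij := i1_spec n i.
move: (F a%:Z %% n%:Z)%Z (F b%:Z %% n%:Z)%Z (i1 n i) => ra rb j.
do ! (case: ifP => ?); lia.
Qed.

Lemma mod_pos (n a : nat) : (0 < n)%N -> (1 <= a <= n)%N ->
  (a%:Z %% n%:Z)%Z = if a == n then 0 else a%:Z.
Proof.
move=> n0 ha.
case: eqP => e.
  rewrite (@modk n 1) //; lia.
rewrite (@modk n 0) //; lia.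
Qed.

Lemma injw_id (n : nat) : (2 < n)%N -> injw n id.
Proof.
move=> n2 a b ha hb hab /=.
rewrite !mod_pos //; try lia.
case: (a =P n) => ?; case: (b =P n) => ?; lia.
Qed.

Lemma psi_id (n : nat) : (2 < n)%N -> Psi n id = 0.
Proof.
move=> n2.
have n0 : (0 < n)%N by lia.
rewrite /Psi /=.
rewrite (@sum_same 2 n.+1 (fun _ => 0)); last first.
  move=> b hb; rewrite (@divk n 0) //; lia.
rewrite (@sum_same 2 n (fun _ => 0)); last first.
  move=> b hb; rewrite (@divk n 0) //; lia.
by rewrite !sumr_const_nat !mul0rn addr0.
Qed.

Lemma LB (n : nat) (w : seq 'I_n) : (2 < n)%N ->
  injw n (word_eval w) /\ Psi n (word_eval w) <= (size w)%:Z.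
Proof.
move=> n2.
elim: w => [|i w [IH1 IH2]] /=.
  split; first exact: injw_id.
  by rewrite psi_id.
have ilt := ltn_ord i.
split; first exact: injw_step.
apply: le_trans (@psi_step n i (word_eval w) n2 ilt IH1) _.
move: IH2; move: (Psi n (word_eval w)) => P; lia.
Qed.

Lemma psi_ext (n : nat) (F G : int -> int) : (forall j, F j = G j) -> Psi n F = Psi n G.
Proof.
move=> h; rewrite /Psi.
by congr (_ + _); apply: eq_bigr => b _; rewrite !h.
Qed.

Definition evalN (n : nat) (ws : seq nat) : int -> int :=
  foldr (fun (m : nat) f => fun j => s_gen n m (f j)) id ws.

Lemma evalN_cat n (u v : seq nat) x : evalN n (u ++ v) x = evalN n u (evalN n v x).
Proof. by rewrite /evalN foldr_cat; elim: u x => //= m u IH x; rewrite IH. Qed.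

Lemma modq (n : nat) (q t : int) : (0 < n)%N -> - n%:Z <= t -> t < 2 * n%:Z ->
  ((q * n%:Z + t) %% n%:Z)%Z = if t < 0 then t + n%:Z else if t < n%:Z then t else t - n%:Z.
Proof.
move=> n0 h1 h2.
case: ifP => c1; first by rewrite (@modk n (q - 1)) //; lia.
case: ifP => c2; first by rewrite (@modk n q) //; lia.
by rewrite (@modk n (q + 1)) //; lia.
Qed.

Lemma modspec (n : nat) (q r t : int) : (0 < n)%N -> - n%:Z <= r + t -> r + t < 2 * n%:Z ->
  let v := ((q * n%:Z + r + t) %% n%:Z)%Z in
  (r + t < 0 /\ v = r + t + n%:Z) \/ (0 <= r + t /\ r + t < n%:Z /\ v = r + t) \/
  (n%:Z <= r + t /\ v = r + t - n%:Z).
Proof.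
move=> n0 h1 h2 /=; rewrite -addrA modq //.
case: ifP => ?; first by left.
by case: ifP => ?; right; [left|right]; lia.
Qed.

Ltac modgen n q r n0 :=
  match goal with |- context [((q * n%:Z + r + ?t) %% n%:Z)%Z] =>
    let hv := fresh "hv" in
    have hv := @modspec n q r t n0 ltac:(lia) ltac:(lia);
    move: hv; move: ((q * n%:Z + r + t) %% n%:Z)%Z => v hv
  end.

Lemma evQ (n m k : nat) (x : int) : (2 < n)%N -> (1 <= m)%N -> (m + k = n)%N ->
  evalN n (iota m k) x =
  x + (if m%:Z <= (x %% n%:Z)%Z then 1 else if (x %% n%:Z)%Z == 0 then - k%:Z else 0).
Proof.
move=> n2; have n0 : (0 < n)%N by lia.
elim: k m x => [|k IH] m x hm hmk.
  have [hx /andP [h1 h2]] := @decz n x n0.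
  rewrite /= ; case: ifP => ?; first by lia.
  by case: ifP => ?; lia.
rewrite /= -/(evalN n (iota m.+1 k)) IH //; last by lia.
have mlt : (m < n)%N by lia.
rewrite sgen_dl //.
have [hx /andP [h1 h2]] := @decz n x n0.
move: hx h1 h2; set q := (x %/ n%:Z)%Z; set r := (x %% n%:Z)%Z => hx h1 h2.
rewrite {1 2}hx.
have ij := i1_spec n m.
rewrite /dl; move: ij; move: (i1 n m) => j ij.
have [c1|c1] := boolP (m.+1%:Z <= r); rewrite ?c1 ?(negbTE c1) /=.
  modgen n q r n0; do ! (case: ifP => ?); lia.
have [c2|c2] := boolP (r == 0); rewrite ?c2 ?(negbTE c2) /=.
  modgen n q r n0; do ! (case: ifP => ?); lia.
modgen n q r n0; do ! (case: ifP => ?); lia.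
Qed.

Lemma modspec' (n : nat) (q y : int) : (0 < n)%N -> - n%:Z <= y - q * n%:Z -> y - q * n%:Z < 2 * n%:Z ->
  let v := (y %% n%:Z)%Z in
  (y - q * n%:Z < 0 /\ v = y - q * n%:Z + n%:Z) \/
  (0 <= y - q * n%:Z /\ y - q * n%:Z < n%:Z /\ v = y - q * n%:Z) \/
  (n%:Z <= y - q * n%:Z /\ v = y - q * n%:Z - n%:Z).
Proof.
move=> n0 h1 h2 /=.
have -> : y = q * n%:Z + (y - q * n%:Z) by ring.
rewrite modq //.
case: ifP => ?; first by left; lia.
by case: ifP => ?; right; [left|right]; lia.
Qed.

Ltac nomod t := lazymatch t with
  | context [(_ %% _)%Z] => fail
  | context [if _ then _ else _] => fail
  | _ => idtac end.

Ltac split_if := match goal with |- context [if ?c then _ else _] =>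
  nomod c; let h := fresh "c" in case h: c; cbn iota end.

Ltac modgen2 n q n0 := match goal with |- context [((?y) %% n%:Z)%Z] =>
  nomod y;
  let hv := fresh "hv" in let v := fresh "v" in
  have hv := @modspec' n q y n0 ltac:(lia) ltac:(lia);
  move: hv; move: (y %% n%:Z)%Z => v hv;
  case: hv => [[? ?]|[[? [? ?]]|[? ?]]]; try (exfalso; lia)
  end.

Ltac crunch n q n0 := repeat first [ split_if | modgen2 n q n0 ]; lia.

Fixpoint downw (m : nat) : seq nat := if m is m'.+1 then m :: downw m' else [::].

Lemma evR (n m : nat) (x : int) : (2 < n)%N -> (m.+2 <= n)%N ->
  evalN n (downw m) x =
  x + (if (x %% n%:Z)%Z == 1 then m%:Z
       else if (2 <= (x %% n%:Z)%Z) && ((x %% n%:Z)%Z <= m.+1%:Z) then -1 else 0).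
Proof.
move=> n2; have n0 : (0 < n)%N by lia.
elim: m x => [|m IH] x hm.
  by rewrite /=; case: ifP => ?; [|case: ifP => ?]; lia.
rewrite /= -/(evalN n (downw m)) IH //; last by lia.
have mlt : (m.+1 < n)%N by lia.
rewrite sgen_dl //.
have [hx /andP [h1 h2]] := @decz n x n0.
move: hx h1 h2; set q := (x %/ n%:Z)%Z; set r := (x %% n%:Z)%Z => hx h1 h2.
have ij := i1_spec n m.+1.
rewrite /dl; move: ij; move: (i1 n m.+1) => j ij.
crunch n q n0.
Qed.

Definition w1 (n : nat) : seq nat := iota 1 n.-1 ++ downw n.-2 ++ [:: 0%N].
Definition cw (n : nat) : seq nat := iota 1 n.-1 ++ [:: 0%N].

Lemma evT1 (n : nat) (x : int) : (2 < n)%N ->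
  evalN n (w1 n) x = x + n%:Z * (if (x %% n%:Z)%Z == 1 then -1 else if (x %% n%:Z)%Z == 0 then 1 else 0).
Proof.
move=> n2; have n0 : (0 < n)%N by lia.
rewrite /w1 !evalN_cat (@evQ n 1 n.-1) //; last by lia.
rewrite (@evR n n.-2) //; last by lia.
rewrite /= sgen_dl //.
have [hx /andP [h1 h2]] := @decz n x n0.
move: hx h1 h2; set q := (x %/ n%:Z)%Z; set r := (x %% n%:Z)%Z => hx h1 h2.
rewrite /dl /i1.
crunch n q n0.
Qed.

Lemma evC (n : nat) (x : int) : (2 < n)%N ->
  evalN n (cw n) x = x + (if (x %% n%:Z)%Z == 1 then - n%:Z else if (x %% n%:Z)%Z == 0 then 2 else 1).
Proof.
move=> n2; have n0 : (0 < n)%N by lia.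
rewrite /cw !evalN_cat (@evQ n 1 n.-1) //; last by lia.
rewrite /= sgen_dl //.
have [hx /andP [h1 h2]] := @decz n x n0.
move: hx h1 h2; set q := (x %/ n%:Z)%Z; set r := (x %% n%:Z)%Z => hx h1 h2.
rewrite /dl /i1.
crunch n q n0.
Qed.

Lemma iterC (n k : nat) (x : int) : (2 < n)%N -> (k < n)%N ->
  iter k (evalN n (cw n)) x =
  if (x %% n%:Z)%Z == 1 then x - k%:Z * n%:Z
  else x + k%:Z + (if n%:Z + 1 - (if (x %% n%:Z)%Z == 0 then n%:Z else (x %% n%:Z)%Z) <= k%:Z then 1 else 0).
Proof.
move=> n2; have n0 : (0 < n)%N by lia.
have [hx /andP [h1 h2]] := @decz n x n0.
move: hx h1 h2; set q := (x %/ n%:Z)%Z; set r := (x %% n%:Z)%Z => hx h1 h2.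
elim: k => [|k IH] hk.
  by rewrite /=; repeat split_if; lia.
rewrite iterS IH; last by lia.
rewrite evC //.
case: (boolP (r == 1)) => e1.
  have -> : ((x - k%:Z * n%:Z) %% n%:Z)%Z = 1.
    have -> : x - k%:Z * n%:Z = (- k%:Z) * n%:Z + x by ring.
    by rewrite modzMDl -/r (eqP e1).
  rewrite eqxx; lia.
idtac.
crunch n q n0.
Qed.

Lemma evTn (n : nat) (x : int) : (2 < n)%N ->
  iter n.-1 (evalN n (cw n)) x = x + n%:Z * (if (x %% n%:Z)%Z == 1 then - (n%:Z - 1) else 1).
Proof.
move=> n2; rewrite iterC //; last by lia.
have n0 : (0 < n)%N by lia.
have [hx /andP [h1 h2]] := @decz n x n0.
move: hx h1 h2; set q := (x %/ n%:Z)%Z; set r := (x %% n%:Z)%Z => hx h1 h2.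
by repeat split_if; lia.
Qed.

Definition lam (n a b : nat) (r : int) : int :=
  if r == 1 then - a%:Z - (n%:Z - 1) * b%:Z else if r == 0 then a%:Z + b%:Z else b%:Z.

Definition Wf (n a b : nat) (x : int) : int := x + n%:Z * lam n a b (x %% n%:Z)%Z.

Definition bigw (n a b : nat) : seq nat :=
  flatten (nseq a (w1 n)) ++ flatten (nseq b (flatten (nseq n.-1 (cw n)))).

Lemma evalN_rep n k w x : evalN n (flatten (nseq k w)) x = iter k (evalN n w) x.
Proof. by elim: k x => //= k IH x; rewrite evalN_cat IH. Qed.

Lemma mod_trans (n : nat) (x L : int) : ((x + n%:Z * L) %% n%:Z)%Z = (x %% n%:Z)%Z.
Proof. by rewrite addrC mulrC modzMDl. Qed.

Lemma iter_trans (n k : nat) (f : int -> int) (L : int -> int) (x : int) :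
  (forall y, f y = y + n%:Z * L (y %% n%:Z)%Z) ->
  iter k f x = x + n%:Z * (k%:Z * L (x %% n%:Z)%Z).
Proof.
move=> hf; elim: k => [|k IH]; first by rewrite /= mul0r mulr0 addr0.
rewrite iterS hf IH mod_trans; ring.
Qed.

Lemma ev_big (n a b : nat) (x : int) : (2 < n)%N -> evalN n (bigw n a b) x = Wf n a b x.
Proof.
move=> n2.
rewrite /bigw evalN_cat !evalN_rep.
rewrite (@eq_iter _ _ (iter n.-1 (evalN n (cw n))) (fun y => evalN_rep n n.-1 (cw n) y)).
rewrite (@iter_trans n b _ (fun r => if r == 1 then - (n%:Z - 1) else 1)); last first.
  by move=> y; rewrite evTn.
rewrite (@iter_trans n a _ (fun r => if r == 1 then -1 else if r == 0 then 1 else 0)); last first.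
  by move=> y; rewrite evT1.
rewrite mod_trans /Wf /lam.
case: ifP => _; [|case: ifP => _]; ring.
Qed.

Definition toI (n : nat) (n0 : (0 < n)%N) (m : nat) : 'I_n := Ordinal (ltn_pmod m n0).

Lemma word_map (n : nat) (n0 : (0 < n)%N) (ws : seq nat) (j : int) :
  all (fun m => (m < n)%N) ws -> word_eval (map (@toI n n0) ws) j = evalN n ws j.
Proof.
elim: ws j => //= m ws IH j /andP [hm hws].
by rewrite IH // modn_small.
Qed.

Lemma all_rep (P : pred nat) k w : all P w -> all P (flatten (nseq k w)).
Proof. by move=> h; elim: k => //= k IH; rewrite all_cat h IH. Qed.

Lemma size_rep (T : Type) k (w : seq T) : size (flatten (nseq k w)) = (k * size w)%N.
Proof. by elim: k => //= k IH; rewrite size_cat IH mulSn. Qed.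

Lemma downw_all m : all (fun x => (x <= m)%N) (downw m).
Proof.
elim: m => //= m IH; rewrite leqnn /=.
by apply: sub_all IH => x /= h; lia.
Qed.

Lemma size_downw m : size (downw m) = m.
Proof. by elim: m => //= m ->. Qed.

Lemma bigw_all (n a b : nat) : (2 < n)%N -> all (fun m => (m < n)%N) (bigw n a b).
Proof.
move=> n2.
have hi : all (fun m => (m < n)%N) (iota 1 n.-1).
  by apply/allP => m; rewrite mem_iota; lia.
rewrite /bigw all_cat; apply/andP; split; apply: all_rep.
  rewrite /w1 !all_cat hi /= andbT; apply/andP; split; last by lia.
  by apply: sub_all (downw_all n.-2) => x /= h; lia.
apply: all_rep; rewrite /cw all_cat hi /=; lia.
Qed.

Lemma bigw_size (n a b : nat) : (2 < n)%N -> size (bigw n a b) = (n.-1 * (2 * a + n * b))%N.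
Proof.
move=> n2.
rewrite /bigw size_cat !size_rep /w1 /cw !size_cat size_iota size_downw /=.
nia.
Qed.

Lemma Wpos (n a b j : nat) : (2 < n)%N -> (1 <= j <= n)%N ->
  Wf n a b j%:Z = j%:Z + n%:Z * lam n a b (if j == n then 0 else j%:Z).
Proof. by move=> n2 hj; rewrite /Wf mod_pos //; lia. Qed.

Lemma lam_mid (n a b j : nat) : (2 < n)%N -> (2 <= j < n)%N ->
  lam n a b (if j == n then 0 else j%:Z) = b%:Z.
Proof.
move=> n2 hj.
have -> : (j == n) = false by lia.
rewrite /lam; case: ifP => ?; first lia.
by case: ifP => ?; first lia.
Qed.

Lemma lam_n (n a b : nat) : lam n a b (if n == n then 0 else n%:Z) = a%:Z + b%:Z.
Proof. by rewrite eqxx /lam. Qed.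

Lemma lam_1 (n a b : nat) : (2 < n)%N -> lam n a b (if 1%N == n then 0 else 1%:Z) = - a%:Z - (n%:Z - 1) * b%:Z.
Proof. by move=> n2; have -> : (1%N == n) = false by lia. Qed.

Lemma Psi_W (n a b : nat) : (2 < n)%N -> Psi n (Wf n a b) = (n.-1 * (2 * a + n * b))%N%:Z.
Proof.
move=> n2.
have n0 : (0 < n)%N by lia.
have r1 : (1 <= 1 <= n)%N by lia.
have rn : (1 <= n <= n)%N by lia.
rewrite /Psi big_nat_recr /=; last by lia.
rewrite (@sum_same 2 n (fun _ => `|a%:Z + n%:Z * b%:Z|) _); last first.
  move=> j hj.
  rewrite (@Wpos n a b j n2 (_ : (1 <= j <= n)%N)); last by lia.
  rewrite (@Wpos n a b 1 n2 r1) lam_mid // lam_1 //.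
  rewrite (@divk n (a%:Z + n%:Z * b%:Z)) //.
    nia.
  nia.
rewrite (@sum_same 2 n (fun _ => `|a%:Z|) (fun a0 : nat => `|((Wf n a b n%:Z - Wf n a b a0%:Z) %/ n%:Z)%Z|)); last first.
  move=> j hj.
  rewrite (@Wpos n a b j n2 (_ : (1 <= j <= n)%N)); last by lia.
  rewrite (@Wpos n a b n n2 rn) lam_n lam_mid //.
  rewrite (@divk n (a%:Z)) //.
    nia.
  nia.
rewrite (@Wpos n a b n n2 rn) (@Wpos n a b 1 n2 r1) lam_n lam_1 //.
rewrite (@divk n (2 * a%:Z + n%:Z * b%:Z)); try nia.
rewrite !sumr_const_nat.
nia.
Qed.

Lemma sumZ (m : nat) : \sum_(1 <= i < m.+1) (i%:Z) = ('C(m.+1, 2))%:Z.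
Proof.
elim: m => [|m IH]; first by rewrite big_geq.
rewrite big_nat_recr //= IH (binS m.+1 1) bin1; lia.
Qed.

Lemma W_affine (n a b : nat) : (2 < n)%N -> is_affine_perm n (Wf n a b).
Proof.
move=> n2; have n0 : (0 < n)%N by lia.
split; [|split].
- exists (fun y => y - n%:Z * lam n a b (y %% n%:Z)%Z); split.
    by move=> x; rewrite /Wf mod_trans addrK.
  move=> y; rewrite /Wf.
  have -> : y - n%:Z * lam n a b (y %% n%:Z)%Z = y + n%:Z * (- lam n a b (y %% n%:Z)%Z) by ring.
  by rewrite mod_trans; ring.
- move=> i; rewrite /Wf.
  have -> : ((i + n%:Z) %% n%:Z)%Z = (i %% n%:Z)%Z by rewrite modzDr.
  ring.
rewrite (@sum_same 1 n.+1 (fun i : nat => i%:Z + n%:Z * lam n a b (if i == n then 0 else i%:Z)) _); last first.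
  by move=> i hi; rewrite (@Wpos n a b i n2) //; lia.
rewrite big_split /= sumZ -mulr_sumr.
rewrite big_ltn // big_nat_recr /=; last by lia.
rewrite (@sum_same 2 n (fun _ => b%:Z) _); last first.
  by move=> i hi; rewrite lam_mid.
rewrite lam_n lam_1 // sumr_const_nat.
nia.
Qed.

Lemma lam_bounds (n a b : nat) (r : int) : (2 < n)%N ->
  - a%:Z - (n%:Z - 1) * b%:Z <= lam n a b r /\ lam n a b r <= a%:Z + b%:Z /\
  (lam n a b r != - a%:Z - (n%:Z - 1) * b%:Z -> lam n a b r != a%:Z + b%:Z -> lam n a b r = b%:Z).
Proof.
move=> n2; rewrite /lam.
case: ifP => _; [|case: ifP => _]; split; try nia; split; try nia; move=> h1 h2; try by [].
Qed.

Lemma dec_lam (n a b : nat) (x y : int) : (2 < n)%N -> x < y -> Wf n a b y < Wf n a b x ->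
  lam n a b (y %% n%:Z)%Z < lam n a b (x %% n%:Z)%Z.
Proof.
move=> n2; rewrite /Wf.
move: (lam n a b (y %% n%:Z)%Z) (lam n a b (x %% n%:Z)%Z) => Ly Lx h1 h2.
nia.
Qed.

Lemma W_avoid (n a b k : nat) (p : 'S_k) : (2 < n)%N -> lds_ge4 p -> avoids (Wf n a b) p.
Proof.
move=> n2 [a1 [b1 [c1 [d1 [h1 h2 h3 [q1 q2 q3]]]]]] [f [fi fo]].
have e1 : Wf n a b (f b1) < Wf n a b (f a1) by rewrite fo.
have e2 : Wf n a b (f c1) < Wf n a b (f b1) by rewrite fo.
have e3 : Wf n a b (f d1) < Wf n a b (f c1) by rewrite fo.
have l1 := @dec_lam n a b _ _ n2 (fi _ _ h1) e1.
have l2 := @dec_lam n a b _ _ n2 (fi _ _ h2) e2.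
have l3 := @dec_lam n a b _ _ n2 (fi _ _ h3) e3.
have B1 := @lam_bounds n a b (f a1 %% n%:Z)%Z n2.
have B2 := @lam_bounds n a b (f b1 %% n%:Z)%Z n2.
have B3 := @lam_bounds n a b (f c1 %% n%:Z)%Z n2.
have B4 := @lam_bounds n a b (f d1 %% n%:Z)%Z n2.
move: l1 l2 l3 B1 B2 B3 B4.
move: (lam n a b (f a1 %% n%:Z)%Z) (lam n a b (f b1 %% n%:Z)%Z)
      (lam n a b (f c1 %% n%:Z)%Z) (lam n a b (f d1 %% n%:Z)%Z) => L1 L2 L3 L4.
move: (- a%:Z - (n%:Z - 1) * b%:Z) (a%:Z + b%:Z) => A C.
move=> l1 l2 l3 [B1a [B1b _]] [B2a [B2b B2c]] [B3a [B3b B3c]] [B4a [B4b _]].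
have E2 : L2 = b%:Z by apply: B2c; lia.
have E3 : L3 = b%:Z by apply: B3c; lia.
lia.
Qed.

Theorem mainTheorem9 (n k : nat) (p : 'S_k) :
  (3 <= n)%N -> lds_ge4 p ->
  forall M : nat, exists (i : nat) (W : nat -> int -> int),
    (forall a b : nat, (a < b)%N -> (b < M)%N -> exists x, W a x <> W b x) /\
    (forall a : nat, (a < M)%N ->
       is_affine_perm n (W a) /\ avoids (W a) p /\ has_length n (W a) i).
Proof.
move=> n2 hp M.
have n0 : (0 < n)%N by lia.
exists (n.-1 * (2 * (n * M)))%N, (fun t => Wf n (n * (M - t)) (2 * t)).
split.
  move=> t1 t2 h12 h2M; exists 2.
  have r2 : (1 <= 2 <= n)%N by lia.
  rewrite !(@Wpos n _ _ 2 n2 r2) !lam_mid //.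
  nia.
move=> t ht; split; first exact: W_affine.
split; first exact: W_avoid.
split.
  exists (map (@toI n n0) (bigw n (n * (M - t)) (2 * t))); split.
    rewrite size_map bigw_size //; nia.
  by move=> j; rewrite word_map ?bigw_all // ev_big.
move=> word hw.
have [_ hP] := @LB n word n2.
rewrite (@psi_ext n (word_eval word) (Wf n (n * (M - t)) (2 * t)) hw) Psi_W // in hP.
have -> : (n.-1 * (2 * (n * M)))%N = (n.-1 * (2 * (n * (M - t)) + n * (2 * t)))%N by nia.
lia.
Qed.
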